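(* Let $G$ be a connected graph of order $n(G)\ge 2$. The following statements are equivalent. (i) $\mu_t(G)=n(G)-\operatorname{diam}(G)+1$. (ii) There exists a diametral path $x_0,x_1,\dots,x_k$ in $G$ (that is, a shortest path with $k=\operatorname{diam}(G)$) such that for every pair $u,v$ of vertices of $G$ there exists a shortest $u,v$-path $u=y_0,y_1,\dots,y_{k'}=v$ with $\{y_1,\dots,y_{k'-1}\}\subseteq\{x_1,\dots,x_{k-1}\}$.
   Context: All graphs are finite, simple and undirected; $n(G)$ denotes the order of $G$ and $\operatorname{diam}(G)$ its diameter. Let $G$ be a connected graph and $X\subseteq V(G)$. Two vertices $x,y\in V(G)$ are $X$-visible if there exists a shortest $x,y$-path in $G$ none of whose internal vertices (i.e., vertices other than $x$ and $y$) belongs to $X$. The set $X$ is a total mutual-visibility set of $G$ if every two vertices of $G$ are $X$-visible (the empty set is allowed). The total mutual-visibility number $\mu_t(G)$ is the maximum cardinality of a total mutual-visibility set of $G$. *)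

(* Defs.v *)
(* A finite simple graph is a symmetric irreflexive relation
   g : rel T on a finType T (vertex set T). *)
From mathcomp Require Import all_boot.
Set Implicit Arguments. Unset Strict Implicit. Unset Printing Implicit Defensive.

Section Graph.
Variables (T : finType) (g : rel T).

Definition walk (x : T) (p : seq T) (y : T) : bool :=
  path g x p && (last x p == y).

Definition walk_of_len (x y : T) (k : nat) : bool :=
  [exists p : k.-tuple T, walk x p y].

(* distance: least length of an x,y-walk.  In a connected graph such a
   shortest walk has length < #|T|, so searching 0..#|T|-1 is exact. *)
Definition dist (x y : T) : nat := find (walk_of_len x y) (iota 0 #|T|).

Definition diam : nat := \max_(x : T) \max_(y : T) dist x y.

Definition internal (x : T) (p : seq T) : seq T := behead (belast x p).

Definition shortest_path (x : T) (p : seq T) (y : T) : bool :=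
  walk x p y && (size p == dist x y).

Definition visible (X : {set T}) (x y : T) : bool :=
  [exists p : (dist x y).-tuple T,
     walk x p y && all (fun v => v \notin X) (internal x p)].

Definition total_mutual_visibility_set (X : {set T}) : bool :=
  [forall x, forall y, visible X x y].

Definition mu_t : nat :=
  \max_(X : {set T} | total_mutual_visibility_set X) #|X|.

End Graph.

(* Main.v *)
Require Import Defs.
From mathcomp Require Import all_boot.
From mathcomp Require Import zify.
Set Implicit Arguments. Unset Strict Implicit. Unset Printing Implicit Defensive.

Section Aux.
Variables (T : finType) (g : rel T).
Hypothesis gconn : forall x y : T, connect g x y.

Lemma size_shorten (x : T) p : size (shorten x p) <= size p.
Proof.
elim: p x => [|y p IH] x //=.
case: ifP => _ /=; last by rewrite ltnS.
exact: leq_trans (IH x) (leqnSn _).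
Qed.

Lemma size_shorten_lt (x : T) p : ~~ uniq (x :: p) -> size (shorten x p) < size p.
Proof.
elim: p x => [|y p IH] x //=.
case: ifP => hx /=.
  move=> _; rewrite ltnS; exact: size_shorten.
move=> hu; rewrite ltnS; apply: IH; move: hu; done.
Qed.

Lemma walk_shorten x p y : walk g x p y -> exists p',
  [/\ walk g x p' y, uniq (x :: p'), size p' <= size p &
      (~~ uniq (x :: p) -> size p' < size p)].
Proof.
case/andP => pp /eqP <-.
case: (shortenP pp) (size_shorten x p) (@size_shorten_lt x p) => p' ep' up' _ h1 h2.
by exists p'; split => //; rewrite /walk ep' eqxx.
Qed.

Lemma has_walk x y : has (walk_of_len g x y) (iota 0 #|T|).
Proof.
have /connectP [p pp ->] := gconn x y.
have [p' [w u _ _]] := @walk_shorten x p (last x p) (introT andP (conj pp (eqxx _))).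
apply/hasP; exists (size p').
  rewrite mem_iota add0n /=.
  have := max_card (mem (x :: p')); rewrite (card_uniqP u) /=; lia.
by apply/existsP; exists (in_tuple p').
Qed.

Lemma dist_lt x y : dist g x y < #|T|.
Proof. by have := has_walk x y; rewrite has_find size_iota. Qed.

Lemma dist_walk x y : exists p, walk g x p y /\ size p = dist g x y.
Proof.
have := nth_find 0 (has_walk x y); rewrite -/(dist g x y) nth_iota ?dist_lt //.
by case/existsP => t w; exists t; rewrite size_tuple.
Qed.

Lemma dist_min x p y : walk g x p y -> dist g x y <= size p.
Proof.
move=> w; rewrite leqNgt; apply/negP => lt.
have := before_find 0 lt; rewrite nth_iota; last first.
  by apply: ltn_trans lt (dist_lt x y).
rewrite add0n =>/negbT/negP; apply; apply/existsP; by exists (in_tuple p).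
Qed.

Lemma shortest_uniq x p y : walk g x p y -> size p = dist g x y -> uniq (x :: p).
Proof.
move=> w hs; apply/negPn/negP => nu.
have [p' [w' _ _ lt]] := walk_shorten w.
have := dist_min w'; have := lt nu; lia.
Qed.

Lemma internal_uniq (x : T) p : uniq (x :: p) -> uniq (internal x p).
Proof.
rewrite lastI rcons_uniq /internal => /andP [_].
by case: (belast x p) => //= a s /andP [].
Qed.

Lemma size_internal (x : T) p : size (internal x p) = (size p).-1.
Proof. by rewrite /internal size_behead size_belast. Qed.

Lemma vis_walk (X : {set T}) x y : visible g X x y -> exists p,
  [/\ walk g x p y, size p = dist g x y & all (fun v => v \notin X) (internal x p)].
Proof.
case/existsP => t /andP [w a]; exists t; split => //; exact: size_tuple.
Qed.

Lemma walk_vis (X : {set T}) x y p : walk g x p y -> size p = dist g x y ->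
  all (fun v => v \notin X) (internal x p) -> visible g X x y.
Proof.
move=> w /eqP hs a; apply/existsP; exists (Tuple hs); exact/andP.
Qed.

Lemma tmv_bound (X : {set T}) x y : total_mutual_visibility_set g X ->
  #|X| + (dist g x y).-1 <= #|T|.
Proof.
move/forallP/(_ x)/forallP/(_ y)/vis_walk => [p [w hs a]].
have u := internal_uniq (shortest_uniq w hs).
have sub : [set z in internal x p] \subset ~: X.
  apply/subsetP => z; rewrite inE in_setC => hz; exact: (allP a).
have := subset_leq_card sub; rewrite cardsE (card_uniqP u) size_internal hs.
have := cardsC X; lia.
Qed.

End Aux.

Theorem proposition2p2 (T : finType) (g : rel T)
  (gsym : symmetric g) (girr : irreflexive g)
  (gconn : forall x y : T, connect g x y)
  (hn : 2 <= #|T|) :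
  mu_t g = #|T| - diam g + 1 <->
  exists (x : T) (p : seq T),
    shortest_path g x p (last x p) /\ size p = diam g /\
    forall u v : T, exists q : seq T,
      shortest_path g u q v /\ {subset internal u q <= internal x p}.
Proof.
set k := diam g.
have dle : forall x y, dist g x y <= k.
  move=> x y; apply: leq_trans (leq_bigmax y) _.
  rewrite /k /diam; exact: (@leq_bigmax _ (fun x => \max_(y : T) dist g x y) x).
have [x0 [y0 hk]] : exists x y, dist g x y = k.
  have h0 : 0 < #|T| by lia.
  have [a ha] := eq_bigmax (fun x => \max_(y : T) dist g x y) h0.
  have [b hb] := eq_bigmax (fun y => dist g a y) h0.
  by exists a, b; rewrite /k /diam ha hb.
have klt : k < #|T| by rewrite -hk; exact: dist_lt.
have kge : 1 <= k.
  have /card_gt1P [a [b [_ _ ab]]] := hn.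
  have := dle a b; have [p [w hs]] := dist_walk gconn a b.
  case: p w hs => [|c p] w hs; last by rewrite -hs /=; lia.
  by move: w; rewrite /walk /= => /eqP ab'; rewrite ab' eqxx in ab.
have upper : mu_t g <= #|T| - k + 1.
  apply/bigmax_leqP => X hX; have := tmv_bound gconn x0 y0 hX; rewrite hk; lia.
have set0tmv : total_mutual_visibility_set g set0.
  apply/forallP => x; apply/forallP => y.
  have [p [w hs]] := dist_walk gconn x y.
  by apply: (walk_vis w hs); apply/allP => z _; rewrite in_set0.
split.
- move=> hmu.
  case: (@arg_maxnP _ set0 (total_mutual_visibility_set g) (fun X => #|X|) set0tmv)
    => X hX hmax.
  have hXc : #|X| = mu_t g.
    apply/eqP; rewrite eqn_leq (@leq_bigmax_cond _ _ (fun X : {set T} => #|X|) _ hX) /=.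
    by apply/bigmax_leqP => Y hY; apply: hmax.
  have /vis_walk [p [w hs a]] := forallP (forallP hX x0) y0.
  have u := internal_uniq (shortest_uniq gconn w hs).
  have hset : [set z in internal x0 p] = ~: X.
    apply/eqP; rewrite eqEcard; apply/andP; split.
      apply/subsetP => z; rewrite inE in_setC => hz; exact: (allP a).
    rewrite [X in _ <= X]cardsE (card_uniqP u) size_internal hs hk.
    have := cardsC X; lia.
  exists x0, p; split; last split.
  + move: (w) => /andP [_ /eqP ->]; rewrite /shortest_path w hs eqxx //.
  + by rewrite hs hk.
  + move=> u' v; have /vis_walk [q [wq hq aq]] := forallP (forallP hX u') v.
    exists q; split; first by rewrite /shortest_path wq hq eqxx.
    move=> z hz; have : z \in ~: X by rewrite in_setC; exact: (allP aq).
    by rewrite -hset inE.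
- move=> [x [p [/andP [w /eqP hs] [hsz hv]]]].
  have u := internal_uniq (shortest_uniq gconn w hs).
  set X := ~: [set z in internal x p].
  have hX : total_mutual_visibility_set g X.
    apply/forallP => u'; apply/forallP => v.
    have [q [/andP [wq /eqP hq] sub]] := hv u' v.
    apply: (walk_vis wq hq); apply/allP => z hz.
    by rewrite in_setC negbK inE; apply: sub.
  have := @leq_bigmax_cond _ _ (fun X : {set T} => #|X|) _ hX.
  have := cardsC [set z in internal x p].
  rewrite cardsE (card_uniqP u) size_internal hsz -/X -/(mu_t g).
  move: upper; rewrite -/k; lia.
Qed.
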